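(* For every symmetric sequence space $X$ and every $x\in X$, $$\|x\|_X\le\Big\|\sum_{k=0}^\infty x^*_{2^k}e_{k+1}\Big\|_{E_X}\le5\|x\|_X.$$
   Context: A Banach sequence lattice is a Banach space $E$ of real sequences such that $x\in E$, $|y_k|\le|x_k|$ imply $y\in E$, $\|y\|_E\le\|x\|_E$. $u^*$ is the nonincreasing rearrangement of $(|u_k|)$, $u^*_k=\inf_{\mathrm{card}A=k-1}\sup_{i\notin A}|u_i|$. A symmetric sequence space is a Banach sequence lattice $X\subset\ell^\infty$ such that $x\in X$, $y^*=x^*$ imply $y\in X$, $\|y\|_X=\|x\|_X$; standing assumption: $X$ is separable or has the Fatou property. $e_k$ is the $k$-th unit vector. $E_X$ is the Banach sequence lattice of all real sequences $a$ with $\|a\|_{E_X}:=\|\sum_{k=1}^\infty a_k\sum_{i=2^{k-1}}^{2^k-1}e_i\|_X<\infty$. *)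

(* Defs.v *)
From HB Require Import structures.
From mathcomp Require Import all_boot all_order all_algebra.
From mathcomp Require Import all_classical all_reals all_analysis.

Set Implicit Arguments.
Unset Strict Implicit.
Unset Printing Implicit Defensive.

Import Order.TTheory GRing.Theory Num.Theory.
Import numFieldNormedType.Exports.
Local Open Scope classical_set_scope.
Local Open Scope ring_scope.

(* Conventions: a real sequence is u : nat -> R, where u i (i >= 0) is the
   paper's u_{i+1} (the paper indexes from 1). *)

Section SeqSpaces.
Variable R : realType.

(* Nonincreasing rearrangement, 0-based: rearr u k = paper's u^*_{k+1}
   = inf_{card A = k} sup_{i \notin A} |u_i|, valued in extended reals
   (so that it is meaningful for unbounded sequences as well). *)
Definition rearr (u : nat -> R) (k : nat) : \bar R :=
  ereal_inf [set ereal_sup [set (`|u i|)%:E | i in [set i | i \notin s]]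
            | s in [set s : seq nat | uniq s /\ size s = k]].

(* X is a Banach space of real sequences with norm N (N only meaningful on X). *)
Definition is_banach_seq_space (X : set (nat -> R)) (N : (nat -> R) -> R) :=
  [/\ X (fun _ => 0),
      (forall x y, X x -> X y -> X (fun i => x i + y i)),
      (forall c x, X x -> X (fun i => c * x i)) &
      (forall x, X x -> 0 <= N x /\ (N x = 0 -> x = (fun _ => 0)))] /\
  [/\ (forall c x, X x -> N (fun i => c * x i) = `|c| * N x),
      (forall x y, X x -> X y -> N (fun i => x i + y i) <= N x + N y) &
      (forall u : nat -> nat -> R, (forall n, X (u n)) ->
        (forall e, 0 < e -> exists M, forall m n, (M <= m)%N -> (M <= n)%N ->
           N (fun i => u m i - u n i) < e) ->
        exists x, X x /\ (forall e, 0 < e -> exists M, forall n, (M <= n)%N ->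
           N (fun i => u n i - x i) < e))].

Definition is_banach_seq_lattice (X : set (nat -> R)) (N : (nat -> R) -> R) :=
  is_banach_seq_space X N /\
  (forall x y, X x -> (forall k, `|y k| <= `|x k|) -> X y /\ N y <= N x).

Definition separable_space (X : set (nat -> R)) (N : (nat -> R) -> R) :=
  exists D : nat -> nat -> R, (forall n, X (D n)) /\
    forall x, X x -> forall e, 0 < e -> exists n, N (fun i => x i - D n i) < e.

Definition fatou_property (X : set (nat -> R)) (N : (nat -> R) -> R) :=
  forall (xs : nat -> nat -> R) (x : nat -> R),
    (forall n, X (xs n)) ->
    (forall n k, 0 <= xs n k <= xs n.+1 k) ->
    (forall k, (fun n => xs n k) @ \oo --> x k) ->
    (exists C, forall n, N (xs n) <= C) ->
    X x /\ N x = sup (range (fun n => N (xs n))).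

Definition symmetric_seq_space (X : set (nat -> R)) (N : (nat -> R) -> R) :=
  [/\ is_banach_seq_lattice X N,
      (forall x, X x -> exists M, forall k, `|x k| <= M),
      (forall x y, X x -> rearr y = rearr x -> X y /\ N y = N x) &
      (separable_space X N \/ fatou_property X N)].

(* For a = (a_1, a_2, ...) (0-based a k = paper a_{k+1}), the sequence
   sum_k a_k sum_{i=2^{k-1}}^{2^k-1} e_i; 0-based index i belongs to paper
   block trunc_log 2 (i+1) + 1.  E_X = {a | X (block a)}, ||a||_{E_X} = N (block a). *)
Definition block (a : nat -> R) : nat -> R := fun i => a (trunc_log 2 i.+1).

Definition EX_mem (X : set (nat -> R)) (a : nat -> R) := X (block a).
Definition EX_norm (N : (nat -> R) -> R) (a : nat -> R) := N (block a).

(* The sequence sum_{k>=0} x^*_{2^k} e_{k+1}: its 0-based k-th entry is the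
   paper's x^*_{2^k} = rearr x (2^k - 1).  (Finite for bounded x.) *)
Definition dyadic_rearr (x : nat -> R) : nat -> R :=
  fun k => fine (rearr x (2 ^ k).-1).

End SeqSpaces.

(* Main.v *)
Require Import Defs.
From mathcomp Require Import all_boot all_order all_algebra.
From mathcomp Require Import all_classical all_reals all_analysis.
From mathcomp Require Import zify.
Import Order.TTheory GRing.Theory Num.Theory.
Local Open Scope ring_scope.

Lemma ph (f : nat -> nat) (finj : injective f) (t : seq nat) :
  exists2 i, (i <= size t)%N & f i \notin t.
Proof.
case/boolP: (has (fun i => f i \notin t) (iota 0 (size t).+1)).
  by case/hasP => i; rewrite mem_iota add0n ltnS => /andP[_ hi] fi; exists i.
move/hasPn => H.
have : (size (map f (iota 0 (size t).+1)) <= size t)%N.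
  apply: uniq_leq_size; first by rewrite map_inj_uniq // iota_uniq.
  by move=> y /mapP [i /H /negPn hi ->].
by rewrite size_map size_iota ltnn.
Qed.

Section S.
Variable R : realType.
Local Open Scope ereal_scope.

Lemma rearr_spread (s : nat -> R) (f : nat -> nat) (u : nat -> R) :
  injective f -> (forall i, (0 <= s i)%R) ->
  (forall i j, (i <= j)%N -> (s j <= s i)%R) ->
  (forall i, `|u (f i)|%R = s i) ->
  (forall j, (forall i, f i != j) -> u j = 0%R) ->
  forall k, rearr u k = (s k)%:E.
Proof.
move=> finj s0 sdec hu hz k.
apply/eqP; rewrite eq_le; apply/andP; split.
- apply: ge_ereal_inf.
  exists (ereal_sup [set (`|u i|%R)%:E | i in [set i | i \notin map f (iota 0 k)]]).
    exists (map f (iota 0 k)) => //; split.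
      by rewrite map_inj_uniq // iota_uniq.
    by rewrite size_map size_iota.
  apply: ge_ereal_sup => _ [j /= hj <-]; rewrite lee_fin.
  case: (pselect (exists i, f i = j)) => [[i fij]|nf].
    subst j; rewrite hu; apply: sdec.
    rewrite leqNgt; apply/negP => ik; move/negP: hj; apply.
    by apply: map_f; rewrite mem_iota.
  rewrite hz ?normr0 // => i; apply/eqP => fij; apply: nf; by exists i.
- apply: le_ereal_inf_tmp => _ [t [ut st] <-].
  have [i hi fi] := @ph f finj t.
  apply: le_ereal_sup_tmp; exists (`|u (f i)|%R)%:E; first by exists (f i).
  by rewrite hu lee_fin; apply: sdec; rewrite -st.
Qed.

Lemma rearr_ge0 (u : nat -> R) k : 0 <= rearr u k.
Proof.
apply: le_ereal_inf_tmp => _ [t [ut st] <-].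
have [i hi fi] := @ph id (@inj_id nat) t.
apply: le_ereal_sup_tmp; exists (`|u i|%R)%:E; first by exists i.
by rewrite lee_fin.
Qed.

Lemma rearr_le (u : nat -> R) (M : R) k : (forall i, `|u i| <= M)%R ->
  rearr u k <= M%:E.
Proof.
move=> hM; apply: ge_ereal_inf.
exists (ereal_sup [set (`|u i|%R)%:E | i in [set i | i \notin iota 0 k]]).
  exists (iota 0 k) => //; split; [exact: iota_uniq | by rewrite size_iota].
by apply: ge_ereal_sup => _ [j /= hj <-]; rewrite lee_fin.
Qed.

Lemma rearr_nonincr (u : nat -> R) k : rearr u k.+1 <= rearr u k.
Proof.
apply: le_ereal_inf_tmp => _ [t [ut st] <-].
have [j hj fj] := @ph id (@inj_id nat) t.
apply: ge_ereal_inf.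
exists (ereal_sup [set (`|u i|%R)%:E | i in [set i | i \notin rcons t j]]).
  exists (rcons t j) => //; split; first by rewrite rcons_uniq fj.
  by rewrite size_rcons st.
apply: ereal_sup_le => _ [i /= hi <-]; exists i => //=.
by move: hi; rewrite mem_rcons in_cons negb_or => /andP[].
Qed.

Lemma rearr_anti (u : nat -> R) i j : (i <= j)%N -> rearr u j <= rearr u i.
Proof.
move=> /subnK <-; elim: (j - i)%N => [|d IH] //.
by rewrite addSn; apply: le_trans (rearr_nonincr _ _) IH.
Qed.
End S.

Lemma ar (i k : nat) : (i.+1 < 2 ^ k.+1)%N -> (i./2 <= (2^k).-1)%N.
Proof. rewrite expnS => h. have := odd_double_half i. rewrite -muln2. lia. Qed.

Lemma ar2 (i : nat) : ((2 ^ trunc_log 2 i.+1).-1 <= i)%N.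
Proof. have := @trunc_logP 2 i.+1 isT isT. lia. Qed.

Theorem mainTheorem7 (R : realType) (X : set (nat -> R)) (N : (nat -> R) -> R)
  (hX : symmetric_seq_space X N) (x : nat -> R) (hx : X x) :
  EX_mem X (dyadic_rearr x) /\
  N x <= EX_norm N (dyadic_rearr x) <= 5 * N x.
Proof.
case: hX => [[[[X0 Xadd Xsc Npos] [Nhom Ntri _]] hL] hbd hsym _].
have [M hM] := hbd x hx.
pose s k := fine (rearr x k).
have hr k : rearr x k = (s k)%:E.
  rewrite /s fineK // ge0_fin_numE ?rearr_ge0 //.
  exact: le_lt_trans (@rearr_le R x M k hM) (ltry M).
have s0 k : 0 <= s k by rewrite -lee_fin -hr rearr_ge0.
have sdec i j : (i <= j)%N -> s j <= s i.
  by move=> ij; rewrite -lee_fin -!hr rearr_anti.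
have hrs : rearr s = rearr x.
  apply/funext => k; rewrite hr.
  apply: (@rearr_spread R s id) => //.
    by move=> i; rewrite ger0_norm.
  by move=> j /(_ j); rewrite eqxx.
have [Xs Ns] := hsym x s hx hrs.
pose u i := if odd i then 0 else s i./2.
pose v i := if odd i then s i./2 else 0.
have hru : rearr u = rearr x.
  rewrite -hrs; apply/funext => k; rewrite (@rearr_spread R s double u) ?hrs ?hr //.
  - exact: can_inj doubleK.
  - by move=> i; rewrite /u odd_double doubleK ger0_norm.
  - move=> j hj; rewrite /u; case: ifP => // oj; exfalso.
    by move/eqP: (hj j./2); apply; have := odd_double_half j; rewrite oj.
have hrv : rearr v = rearr x.
  rewrite -hrs; apply/funext => k; rewrite (@rearr_spread R s (fun i => i.*2.+1) v) ?hrs ?hr //.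
  - by move=> a b /= [] /(can_inj doubleK).
  - by move=> i; rewrite /v /= odd_double /= uphalf_double ger0_norm.
  - move=> j hj; rewrite /v; case: ifP => // oj; exfalso.
    by move/eqP: (hj j./2); apply; have := odd_double_half j; rewrite oj.
have [Xu Nu] := hsym x u hx hru.
have [Xv Nv] := hsym x v hx hrv.
pose d i := u i + v i.
have Xd : X d := Xadd _ _ Xu Xv.
have Nd : N d <= 2 * N x by apply: le_trans (Ntri _ _ Xu Xv) _; rewrite Nu Nv mulr2n mulrDl mul1r.
have hd i : d i = s i./2 by rewrite /d /u /v; case: ifP; rewrite ?addr0 ?add0r.
have hb i : block (dyadic_rearr x) i = s ((2 ^ trunc_log 2 i.+1).-1) by [].
have [Xb Nb] : X (block (dyadic_rearr x)) /\ N (block (dyadic_rearr x)) <= N d.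
  apply: hL => // i; rewrite hb hd !ger0_norm //; apply: sdec; apply: ar.
  exact: trunc_log_ltn.
have [_ Nsb] : X s /\ N s <= N (block (dyadic_rearr x)).
  apply: hL => // i; rewrite hb !ger0_norm //; apply: sdec; exact: ar2.
have Nx0 := (Npos x hx).1.
split => //; apply/andP; split; first by rewrite -Ns.
rewrite /EX_norm; apply: le_trans Nb _; apply: le_trans Nd _.
by apply: ler_wpM2r => //; rewrite ler_nat.
Qed.
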